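(* Let $X$ be a separable infinite dimensional Banach space and let $T$ be a bounded linear operator on $X$. If $T$ satisfies the Hypercyclicity Criterion, then $T$ satisfies the $\varepsilon$-Hypercyclicity Criterion for every $\varepsilon>0$.
   Context: $T$ satisfies the Hypercyclicity Criterion if there exist a sequence of integers $(n(k))_k$, two dense sets $\mathcal{D}_1,\mathcal{D}_2\subset X$ and maps $S_{n(k)}:\mathcal{D}_2\to X$ such that $T^{n(k)}x\to0$ for all $x\in\mathcal{D}_1$, $S_{n(k)}y\to0$ for all $y\in\mathcal{D}_2$, and $T^{n(k)}S_{n(k)}y\to y$ for all $y\in\mathcal{D}_2$. For $\varepsilon>0$, $T$ satisfies the $\varepsilon$-Hypercyclicity Criterion if there exist a dense set $\mathcal{D}_1\subset X$, a countable set $\mathcal{D}_2=\{y_k:k\in\mathbb{N}\}\subset X$ (with a fixed enumeration) such that for each $x\in X\setminus\{0\}$ there are infinitely many $k$ with $y_k$ in the closed ball $B(x,\varepsilon\|x\|)$, an increasing sequence $(n(k))_k\subset\mathbb{N}$ and maps $S_{n(k)}:\mathcal{D}_2\to X$ such that $\|T^{n(k)}x\|\to0$ for all $x\in\mathcal{D}_1$, $\|S_{n(k)}y_k\|\to0$, and $\|T^{n(k)}S_{n(k)}y_k-y_k\|\to0$ as $k\to\infty$. *)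

(* Defs.v *)
From HB Require Import structures.
From mathcomp Require Import all_boot all_order all_algebra.
From mathcomp Require Import all_classical all_reals all_analysis.
Set Implicit Arguments. Unset Strict Implicit. Unset Printing Implicit Defensive.
Import Order.TTheory GRing.Theory Num.Theory.
Import numFieldNormedType.Exports.
Local Open Scope classical_set_scope.
Local Open Scope ring_scope.

Section HC.
Variable K : numFieldType.
Variable X : normedModType K.

Definition separable_space : Prop :=
  exists D : set X, countable D /\ dense D.

Definition infinite_dimensional : Prop :=
  forall n : nat, exists v : 'I_n -> X,
    forall c : 'I_n -> K, \sum_(i < n) c i *: v i = 0 -> forall i, c i = 0.

(* Hypercyclicity Criterion.  T^m x is [iter m T x]; the maps S_{n(k)} are
   [S (n k)], only their values on D2 matter. *)
Definition hypercyclicity_criterion (T : X -> X) : Prop :=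
  exists (n : nat -> nat) (D1 D2 : set X) (S : nat -> X -> X),
    dense D1 /\ dense D2 /\
    (forall x, D1 x -> (fun k => iter (n k) T x) @ \oo --> (0 : X)) /\
    (forall y, D2 y -> (fun k => S (n k) y) @ \oo --> (0 : X)) /\
    (forall y, D2 y -> (fun k => iter (n k) T (S (n k) y)) @ \oo --> y).

(* epsilon-Hypercyclicity Criterion.  D2 = {y k | k : nat} with the fixed
   enumeration y; closed ball B(x, r) = {z | `|z - x| <= r}. *)
Definition eps_hypercyclicity_criterion (eps : K) (T : X -> X) : Prop :=
  exists (D1 : set X) (y : nat -> X) (n : nat -> nat) (S : nat -> X -> X),
    dense D1 /\
    (forall x : X, x != 0 ->
       infinite_set [set k : nat | `|y k - x| <= eps * `|x|]) /\
    {homo n : a b / (a < b)%N} /\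
    (forall x, D1 x -> (fun k => `|iter (n k) T x|) @ \oo --> (0 : K)) /\
    ((fun k => `|S (n k) (y k)|) @ \oo --> (0 : K)) /\
    ((fun k => `|iter (n k) T (S (n k) (y k)) - y k|) @ \oo --> (0 : K)).
End HC.

(* Main.v *)
Require Import Defs.
From HB Require Import structures.
From mathcomp Require Import all_boot all_order all_algebra.
From mathcomp Require Import all_classical all_reals all_analysis.
From mathcomp Require Import ring.
Import Order.TTheory GRing.Theory Num.Theory.
Import numFieldNormedType.Exports.
Local Open Scope classical_set_scope.
Local Open Scope ring_scope.

Lemma Tcvg0 (K : numFieldType) (X : normedModType K) (T : {linear X -> X})
  (cT : continuous T) (z : nat -> X) :
  z @ \oo --> (0:X) -> (fun j => T (z j)) @ \oo --> (0:X).
Proof.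
move=> hz; have := cvg_comp _ _ hz (cT 0); rewrite linear0; exact.
Qed.

Lemma iter_bounded (K : numFieldType) (X : normedModType K) (T : {linear X -> X})
  (cT : continuous T) B : forall (z : nat -> X) (m : nat -> nat),
  z @ \oo --> (0:X) -> (\forall j \near \oo, (m j <= B)%N) ->
  (fun j => iter (m j) T (z j)) @ \oo --> (0:X).
Proof.
elim: B => [|B IH] z m hz hm.
  apply: (cvg_trans _ hz); apply: near_eq_cvg; near=> j.
  have : (m j <= 0)%N by near: j.
  by rewrite leqn0 => /eqP ->.
pose z' j := if m j == 0%N then z j else T (z j).
have -> : (fun j => iter (m j) T (z j)) = (fun j => iter (m j).-1 T (z' j)).
  apply: funext => j; rewrite /z'; case: (m j) => [|k] //=.
  idtac.
by rewrite -iterS iterSr.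
apply: (IH z' (fun j => (m j).-1)).
  have hTz := @Tcvg0 _ _ T cT z hz.
  apply/cvgr0Pnorm_lt => e e0.
  have h1 := (proj1 (cvgr0Pnorm_lt _) hz) e e0.
  have h2 := (proj1 (cvgr0Pnorm_lt _) hTz) e e0.
  near=> j; rewrite /z'; case: ifP => _.
    near: j; exact: h1.
  near: j; exact: h2.
near=> j; have : (m j <= B.+1)%N by near: j.
by case: (m j).
Unshelve. all: end_near.
Qed.

Fixpoint tseq {K : numFieldType} (w : nat -> K) (m : nat) : K :=
  if m is m'.+1 then
    (if 0 < w m' then (if tseq w m' < w m' then tseq w m' else w m') else tseq w m')
  else 1.

Lemma tseq_pos (K : numFieldType) (w : nat -> K) m : 0 < tseq w m.
Proof.
elim: m => [|m IH] /=; first exact: ltr01.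
by case: ifP => // w0; case: ifP.
Qed.

Lemma tseq_le1 (K : numFieldType) (w : nat -> K) m : tseq w m.+1 <= tseq w m.
Proof.
rewrite /=; case: ifP => // w0; case: ifP => // h.
rewrite real_leNgt ?h // ?gtr0_real ?tseq_pos //.
Qed.

Lemma tseq_mono (K : numFieldType) (w : nat -> K) m d : tseq w (m + d) <= tseq w m.
Proof.
elim: d => [|d IH]; first by rewrite addn0.
by rewrite addnS (le_trans (tseq_le1 _ _ _) IH).
Qed.

Lemma tseq_lew (K : numFieldType) (w : nat -> K) m : 0 < w m -> tseq w m.+1 <= w m.
Proof.
by move=> w0 /=; rewrite w0; case: ifP => // /ltW.
Qed.

Lemma diag (K : numFieldType) (a : nat -> nat -> K) :
  (forall i j, 0 <= a i j) -> (forall i, a i @ \oo --> (0:K)) ->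
  exists tau : nat -> K, (forall k, 0 < tau k) /\
    forall phi : nat -> nat, (forall k, a k (phi k) < tau k) ->
      (fun k => a k (phi k)) @ \oo --> (0:K).
Proof.
move=> a0 ha.
case: (pselect (exists e0 : K, 0 < e0 /\ forall i j, 0 < a i j -> ~ (a i j < e0))).
  move=> [e0 [e0p he0]]; exists (fun=> e0); split=> // phi hphi.
  have h0 : forall k, a k (phi k) = 0.
    move=> k; have := a0 k (phi k); rewrite le0r => /orP[/eqP //|pos].
    by exfalso; apply: (he0 _ _ pos); apply: hphi.
  rewrite (funext h0); exact: cvg_cst.
move=> nP.
have he : forall e, 0 < e -> exists i j, 0 < a i j /\ a i j < e.
  move=> e e0; apply: contrapT => H; apply: nP; exists e; split=> // i j pos lt.
  by apply: H; exists i, j.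
pose w m := if @unpickle (prod nat nat) m is Some p then a p.1 p.2 else 0.
exists (tseq w); split; first by move=> k; exact: tseq_pos.
move=> phi hphi; apply/cvgr0Pnorm_lt => e e0.
have [i [j [pos lt]]] := he e e0.
pose m := pickle (i, j).
have wm : w m = a i j by rewrite /w /m pickleK.
near=> k.
have km : (m.+1 <= k)%N by near: k; exact: nbhs_infty_ge.
rewrite ger0_norm //.
apply: (lt_le_trans (hphi k)); apply: le_trans (ltW lt).
have hw : tseq w m.+1 <= w m by apply: tseq_lew; rewrite wm.
rewrite -wm; apply: le_trans hw.
by rewrite -(subnKC km) tseq_mono.
Unshelve. all: end_near.
Qed.

Lemma unbounded (K : numFieldType) (X : normedModType K) (T : {linear X -> X})
  (cT : continuous T) (n : nat -> nat) (D2 : set X) (S : nat -> X -> X) (x0 : X) :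
  x0 != 0 -> dense D2 ->
  (forall y, D2 y -> (fun k => S (n k) y) @ \oo --> (0 : X)) ->
  (forall y, D2 y -> (fun k => iter (n k) T (S (n k) y)) @ \oo --> y) ->
  forall B J, exists j, (J <= j)%N /\ (B < n j)%N.
Proof.
move=> x0n dD2 h2 h3 B J.
apply: contrapT => H.
have hb : \forall j \near \oo, (n j <= B)%N.
  near=> j; have Jj : (J <= j)%N by near: j; exact: nbhs_infty_ge.
  rewrite leqNgt; apply/negP => Bj; apply: H; by exists j.
have D20 : forall y, D2 y -> y = 0.
  move=> y D2y.
  have h0 := @iter_bounded _ _ T cT B _ (fun k => n k) (h2 y D2y) hb.
  exact: (cvg_unique _ (h3 y D2y) h0).
have x0p : 0 < `|x0| by rewrite normr_gt0.
have [z [bz D2z]] := dD2 (ball x0 `|x0|) (ex_intro _ x0 (ballxx x0 x0p)) (ball_open _ _).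
move: bz; rewrite (D20 z D2z) -ball_normE /= subr0 ltxx //.
Unshelve. all: end_near.
Qed.

Fixpoint phis (c : nat * nat * nat -> nat) (n : nat -> nat) (k : nat) : nat :=
  match k with
  | 0 => c (0, 0, 0)%N
  | k'.+1 => c (k'.+1, phis c n k', n (phis c n k'))
  end.

Theorem proposition3p4 (K : numFieldType) (X : completeNormedModType K)
  (T : {linear X -> X}) :
  separable_space X -> infinite_dimensional X -> continuous T ->
  hypercyclicity_criterion T ->
  forall eps : K, 0 < eps -> eps_hypercyclicity_criterion eps T.
Proof.
move=> [D [Dc Dd]] infd cT [n [D1 [D2 [S [dD1 [dD2 [h1 [h2 h3]]]]]]]] eps eps0.
have [x0 x0n] : exists x0 : X, x0 != 0.
  have [v hv] := infd 1%N; exists (v ord0); apply/eqP => v0.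
  have := hv (fun=> 1) _ ord0; rewrite big_ord1 scale1r => /(_ v0) /eqP.
  by rewrite oner_eq0.
have unb := @unbounded _ _ T cT n D2 S x0 x0n dD2 h2 h3.
have [f finj] := elimT (countable_injP D) Dc.
have /choice [g hg] : forall m : nat, exists x : X,
   (exists z, D z /\ f z = m) -> D x /\ f x = m.
  move=> m; case: (pselect (exists z, D z /\ f z = m)) => [[z hz]|nz].
    by exists z.
  by exists 0 => /nz.
have hgD : forall d, D d -> g (f d) = d.
  move=> d Dd'; have [Dg fg] := hg (f d) (ex_intro _ d (conj Dd' erefl)).
  by apply: finj; rewrite ?inE.
pose c := eps / 2.
have c0 : 0 < c by rewrite divr_gt0.
have /choice [e he] : forall a : nat, exists z : X,
   D2 z /\ (g a != 0 -> `|z - g a| <= c * `|g a|).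
  move=> a; case: (eqVneq (g a) 0) => ga0.
    have [z [_ D2z]] := dD2 setT (ex_intro _ 0 I) openT.
    by exists z; split => //; rewrite ga0 eqxx.
  have r0 : 0 < c * `|g a| by rewrite mulr_gt0 // normr_gt0.
  have [z [bz D2z]] := dD2 (ball (g a) (c * `|g a|))
     (ex_intro _ (g a) (ballxx _ r0)) (ball_open _ _).
  exists z; split => // _; move: bz; rewrite -ball_normE /= distrC.
  exact: ltW.
pose pg k := if @unpickle (prod nat nat) k is Some p then p.1 else 0%N.
pose y k := e (pg k).
have D2y : forall k, D2 (y k) by move=> k; case: (he (pg k)).
pose a k j := `|S (n j) (y k)| + `|iter (n j) T (S (n j) (y k)) - y k|.
have a0 : forall k j, 0 <= a k j by move=> k j; rewrite addr_ge0.
have ha : forall k, a k @ \oo --> (0:K).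
  move=> k.
  have hu : (fun j => `|S (n j) (y k)|) @ \oo --> (0:K).
    have := cvg_norm (h2 _ (D2y k)); rewrite normr0; exact.
  have hv : (fun j => `|iter (n j) T (S (n j) (y k)) - y k|) @ \oo --> (0:K).
    apply/cvgr0Pnorm_lt => r r0.
    have := (proj1 (cvgrPdistC_lt _ _) (h3 _ (D2y k))) r r0.
    move=> hh; near=> j; rewrite normr_id; near: j; exact: hh.
  have := cvgD hu hv; rewrite addr0; exact.
have [tau [taup htau]] := @diag K a a0 ha.
have /choice [cc hcc] : forall p : nat * nat * nat, exists j : nat,
   [/\ (p.1.2 < j)%N, (p.2 < n j)%N & a p.1.1 j < tau p.1.1].
  move=> [[k J] B] /=.
  have [N _ hN] := (proj1 (cvgr0Pnorm_lt _) (ha k)) (tau k) (taup k).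
  have [j [hj hn]] := unb B (maxn N J.+1).
  exists j; split => //.
    by apply: leq_trans hj; rewrite leq_maxr.
  have := hN j (leq_trans (leq_maxl _ _) hj).
  by rewrite ger0_norm.
pose phi := phis cc n.
have phiS : forall k, (phi k < phi k.+1)%N /\ (n (phi k) < n (phi k.+1))%N.
  move=> k; rewrite /phi /=.
  by case: (hcc (k.+1, phis cc n k, n (phis cc n k))).
have phia : forall k, a k (phi k) < tau k.
  case=> [|k]; rewrite /phi /=.
    by case: (hcc (0, 0, 0)%N).
  by case: (hcc (k.+1, phis cc n k, n (phis cc n k))).
have phige : forall k, (k <= phi k)%N.
  elim=> [//|k IH]; apply: leq_ltn_trans IH _; exact: (proj1 (phiS k)).
have hA := htau phi phia.
exists D1, y, (fun k => n (phi k)), S.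
split; first exact: dD1.
split.
  move=> x xn.
  pose dl := c / (c + 1).
  have c1 : 0 < c + 1 by rewrite addr_gt0.
  have xp : 0 < `|x| by rewrite normr_gt0.
  have r0 : 0 < dl * `|x| by rewrite mulr_gt0 // divr_gt0.
  have [d [bd Dd']] := Dd (ball x (dl * `|x|)) (ex_intro _ x (ballxx _ r0)) (ball_open _ _).
  move: bd; rewrite -ball_normE /= => bd.
  have dl1 : dl < 1 by rewrite ltr_pdivrMr // mul1r ltrDl ltr01.
  have d0 : d != 0.
    apply/eqP => d0; move: bd; rewrite d0 subr0 => bd.
    have : dl * `|x| < `|x| by rewrite -{2}[`|x|]mul1r ltr_pM2r.
    by move=> /(lt_trans bd); rewrite ltxx.
  have hgd := hgD d Dd'.
  have key : `|e (f d) - x| <= eps * `|x|.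
    have [_ he2] := he (f d); rewrite hgd in he2; have hed := he2 d0.
    set r := `|x - d|.
    have hr : (c + 1) * r <= c * `|x|.
      have -> : c * `|x| = (c + 1) * (dl * `|x|).
        rewrite /dl mulrA mulrCA divff ?mulr1 //; exact: lt0r_neq0.
      by rewrite ler_wpM2l // ?ltW.
    have hd : `|d| <= `|x| + r.
      have -> : `|d| = `|x - (x - d)| by rewrite opprB addrCA subrr addr0.
      exact: ler_normB.
    apply: le_trans (ler_distD d _ _) _.
    rewrite (distrC d x) -/r.
    apply: le_trans (lerD hed (lexx r)) _.
    apply: le_trans (lerD (ler_wpM2l (ltW c0) hd) (lexx r)) _.
    have -> : c * (`|x| + r) + r = c * `|x| + (c + 1) * r by ring.
    have -> : eps * `|x| = c * `|x| + c * `|x| by rewrite -mulrDl /c -splitr.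
    by rewrite lerD2l.
  apply/infiniteP; apply/pcard_leP; apply/injfunPex.
  exists (fun m => pickle (f d, m)).
    move=> m _ /=; rewrite /y /pg pickleK /=; exact: key.
  move=> m1 m2 _ _ /= h; have := congr1 (@unpickle (prod nat nat)) h.
  by rewrite !pickleK => -[].
split.
  apply: (homo_ltn ltn_trans) => i; exact: (proj2 (phiS i)).
split.
  move=> x D1x; apply/cvgr0Pnorm_lt => r r0.
  have [N _ hN] := (proj1 (cvgr0Pnorm_lt _) (h1 x D1x)) r r0.
  exists N => // k /= Nk; rewrite normr_id; apply: hN.
  exact: leq_trans Nk (phige k).
split.
  apply/cvgr0Pnorm_lt => r r0.
  have hh := (proj1 (cvgr0Pnorm_lt _) hA) r r0; near=> k.
  rewrite normr_id; apply: (@le_lt_trans _ _ (a k (phi k))).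
    by rewrite /a lerDl.
  rewrite -[a k (phi k)]ger0_norm //; near: k; exact: hh.
apply/cvgr0Pnorm_lt => r r0.
have hh := (proj1 (cvgr0Pnorm_lt _) hA) r r0; near=> k.
rewrite normr_id; apply: (@le_lt_trans _ _ (a k (phi k))).
  by rewrite /a lerDr.
rewrite -[a k (phi k)]ger0_norm //; near: k; exact: hh.
Unshelve. all: end_near.
Qed.
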